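(* Let $n\geq 4$, and let $\Omega_n\subset\mathbb{R}^{2n-3}$, the associated polygons, and $\Gamma_n$ be as described in the context. Define $\Theta:\mathbb{R}^5\to\mathbb{R}$ by $$\Theta(u_1,u_2,u_3,u_4,u_5)=u_1u_2(u_4^2+u_5^2-u_3^2)+u_4u_5(u_1^2+u_2^2-u_3^2),$$ and $\gamma:\Omega_n\to\mathbb{R}^{n-3}$ by $\gamma(\omega)=(\gamma_1(\omega),\dots,\gamma_{n-3}(\omega))$, where $\gamma_k(\omega)=\Theta(t_k,x_k,t_{k+1},x_{k+1},t_{k+2})$ for $\omega=(t_1,x_1,t_2,x_2,\dots,t_{n-2},x_{n-2},t_{n-1})$. Then $\Gamma_n=\gamma^{-1}(\{0\})$, and $\Gamma_n$ is a differentiable submanifold of dimension $n$ of $\mathbb{R}^{2n-3}$.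
   Context: Let $\mathcal V=\{(x,y,z)\in\mathbb{R}^3: 0<x<y+z,\ 0<y<x+z,\ 0<z<x+y\}$. For $(t,x,s)\in\mathcal V$ let $\alpha(t,x,s)\in\,]0,\pi[$ be the angle opposite the side of length $x$ in a triangle with side lengths $t,x,s$, i.e. $\alpha(t,x,s)=\arccos\frac{t^2+s^2-x^2}{2ts}$. Let $$\Omega_n=\Big\{\omega=(t_1,x_1,t_2,x_2,\dots,t_{n-2},x_{n-2},t_{n-1})\in(\mathbb{R}_{>0})^{2n-3}:\ (t_k,x_k,t_{k+1})\in\mathcal V \text{ for } k=1,\dots,n-2,\ \sum_{k=1}^{n-2}\alpha(t_k,x_k,t_{k+1})<2\pi\Big\}.$$ To $\omega\in\Omega_n$ associate the planar polygon $(M_1,\dots,M_n)$ with $M_n=O$ the origin, $M_k=t_k(\cos\theta_k,\sin\theta_k)$ for $1\le k\le n-1$, where $\theta_1=0$ and $\theta_{k+1}=\theta_k+\alpha(t_k,x_k,t_{k+1})$. Thus $t_k=M_nM_k$ and $x_k=M_kM_{k+1}$; the sides of the polygon have lengths $t_1,x_1,\dots,x_{n-2},t_{n-1}$, and $t_2,\dots,t_{n-2}$ are the lengths of the diagonals from $M_n$. The paper identifies $\Omega_n$ with the space of isometry classes of polygons star-shaped with respect to the vertex $M_n$. $\Gamma_n$ denotes the set of $\omega\in\Omega_n$ whose associated polygon is inscribable, i.e. all its vertices lie on a common circle. *)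

(* Defs.v *)
From HB Require Import structures.
From mathcomp Require Import all_boot all_order all_algebra.
From mathcomp Require Import all_classical all_reals all_analysis.
Set Implicit Arguments. Unset Strict Implicit. Unset Printing Implicit Defensive.
Import Order.TTheory GRing.Theory Num.Theory.
Import numFieldNormedType.Exports.
Local Open Scope classical_set_scope.
Local Open Scope ring_scope.

Section Polygons.
Variable R : realType.

(* nat-indexed access to the coordinates of a row vector (0 outside range) *)
Definition coord (m : nat) (w : 'rV[R]_m) (i : nat) : R :=
  match @insub _ (fun j => j < m)%N 'I_m i with
  | Some j => w ord0 j
  | None => 0
  end.

(* omega = (t_1, x_1, t_2, ..., x_{n-2}, t_{n-1}) stored 0-based:
   tt w k = t_{k+1} = coordinate 2k,  xx w k = x_{k+1} = coordinate 2k+1 *)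
Definition tt (m : nat) (w : 'rV[R]_m) (k : nat) : R := coord w (2 * k).
Definition xx (m : nat) (w : 'rV[R]_m) (k : nat) : R := coord w (2 * k + 1).

Definition inV (a b c : R) : Prop :=
  [/\ 0 < a < b + c, 0 < b < a + c & 0 < c < a + b].

(* angle opposite the side of length b in the triangle with sides a, b, c *)
Definition alpha (a b c : R) : R := acos ((a ^+ 2 + c ^+ 2 - b ^+ 2) / (2 * a * c)).

Definition alphak (m : nat) (w : 'rV[R]_m) (k : nat) : R :=
  alpha (tt w k) (xx w k) (tt w k.+1).

Definition Omega (n : nat) : set 'rV[R]_(2 * n - 3) :=
  [set w : 'rV[R]_(2 * n - 3) | (forall i, 0 < w ord0 i) /\
           (forall k, (k < n - 2)%N -> inV (tt w k) (xx w k) (tt w k.+1)) /\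
           \sum_(k < n - 2) alphak w k < 2 * pi].

(* theta_{k+1} (0-based k): theta_1 = 0, theta_{k+1} = theta_k + alpha_k *)
Definition theta (m : nat) (w : 'rV[R]_m) (k : nat) : R :=
  \sum_(j < k) alphak w j.

(* vertex M_{k+1}, for k < n-1; M_n is the origin *)
Definition vertex (m : nat) (w : 'rV[R]_m) (k : nat) : R * R :=
  (tt w k * cos (theta w k), tt w k * sin (theta w k)).

Definition inscribable (n : nat) (w : 'rV[R]_(2 * n - 3)) : Prop :=
  exists (a b r : R), 0 < r /\
    (0 - a) ^+ 2 + (0 - b) ^+ 2 = r ^+ 2 /\
    (forall k, (k < n - 1)%N ->
       ((vertex w k).1 - a) ^+ 2 + ((vertex w k).2 - b) ^+ 2 = r ^+ 2).

Definition Gamma (n : nat) : set 'rV[R]_(2 * n - 3) :=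
  [set w : 'rV[R]_(2 * n - 3) | @Omega n w /\ inscribable w].

Definition Theta (u1 u2 u3 u4 u5 : R) : R :=
  u1 * u2 * (u4 ^+ 2 + u5 ^+ 2 - u3 ^+ 2) + u4 * u5 * (u1 ^+ 2 + u2 ^+ 2 - u3 ^+ 2).

Definition gamma (n : nat) (w : 'rV[R]_(2 * n - 3)) : 'rV[R]_(n - 3) :=
  \row_(k < n - 3) Theta (tt w k) (xx w k) (tt w k.+1) (xx w k.+1) (tt w k.+2).

Fixpoint iterD (N M : nat) (vs : seq 'rV[R]_N) (f : 'rV[R]_N -> 'rV[R]_M)
  : 'rV[R]_N -> 'rV[R]_M :=
  match vs with
  | [::] => f
  | v :: vs' => fun x => derive (iterD vs' f) x v
  end.

Definition smooth_on (N M : nat) (U : set 'rV[R]_N) (f : 'rV[R]_N -> 'rV[R]_M)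
  : Prop :=
  forall vs : seq 'rV[R]_N,
    (forall x, U x -> {for x, continuous (iterD vs f)}) /\
    (forall x v, U x -> derivable (iterD vs f) x v).

(* S is a (smooth) differentiable submanifold of R^N of dimension d:
   locally straightened by a smooth diffeomorphism onto R^d x {0} *)
Definition submanifold (N d : nat) (S : set 'rV[R]_N) : Prop :=
  forall p, S p ->
    exists (U V : set 'rV[R]_N) (phi psi : 'rV[R]_N -> 'rV[R]_N),
      [/\ open U, U p, open V, smooth_on U phi & smooth_on V psi] /\
      [/\ (forall x, U x -> V (phi x) /\ psi (phi x) = x),
          (forall y, V y -> U (psi y) /\ phi (psi y) = y) &
          (forall x, U x ->
             (S x <-> forall i : 'I_N, (d <= i)%N -> phi x ord0 i = 0))].

End Polygons.
Arguments Omega R n : clear implicits.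
Arguments Gamma R n : clear implicits.
Arguments gamma {R n}.
Arguments submanifold {R N} d S.

(* Main.v *)
Require Import Defs.
From HB Require Import structures.
From mathcomp Require Import all_boot all_order all_algebra.
From mathcomp Require Import all_classical all_reals all_analysis.
From mathcomp Require Import ring lra zify.
From Stdlib Require Import Lia.
Require Import Defs.
Import Order.TTheory GRing.Theory Num.Theory.
Import numFieldNormedType.Exports.
Local Open Scope classical_set_scope.
Local Open Scope ring_scope.

Section Expr.
Variable R : realType.

Inductive expr :=
| EVar of nat | ECst of R | EAdd of expr & expr | EMul of expr & expr
| ENeg of expr | EInv of expr | ESqrt of expr | ECos of expr | ESin of expr
| EAcos of expr.

Variable N : nat.
Implicit Types (x v : 'rV[R]_N) (e : expr).

Fixpoint eval e x : R :=
  match e with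
  | EVar i => coord x i
  | ECst c => c
  | EAdd a b => eval a x + eval b x
  | EMul a b => eval a x * eval b x
  | ENeg a => - eval a x
  | EInv a => (eval a x)^-1
  | ESqrt a => Num.sqrt (eval a x)
  | ECos a => cos (eval a x)
  | ESin a => sin (eval a x)
  | EAcos a => acos (eval a x)
  end.

Fixpoint wf e x : Prop :=
  match e with
  | EVar _ | ECst _ => True
  | EAdd a b | EMul a b => wf a x /\ wf b x
  | ENeg a | ECos a | ESin a => wf a x
  | EInv a => wf a x /\ eval a x != 0
  | ESqrt a => wf a x /\ 0 < eval a x
  | EAcos a => wf a x /\ -1 < eval a x < 1
  end.

Fixpoint D v e : expr :=
  match e with
  | EVar i => ECst (coord v i)
  | ECst _ => ECst 0
  | EAdd a b => EAdd (D v a) (D v b)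
  | EMul a b => EAdd (EMul (D v a) b) (EMul a (D v b))
  | ENeg a => ENeg (D v a)
  | EInv a => ENeg (EMul (D v a) (EInv (EMul a a)))
  | ESqrt a => EMul (D v a) (EInv (EMul (ECst 2) (ESqrt a)))
  | ECos a => ENeg (EMul (D v a) (ESin a))
  | ESin a => EMul (D v a) (ECos a)
  | EAcos a => ENeg (EMul (D v a) (EInv (ESqrt (EAdd (ECst 1) (ENeg (EMul a a))))))
  end.

Lemma wfD v e x : wf e x -> wf (D v e) x.
Proof.
elim: e => //=.
- by move=> a iha b ihb [/iha ? /ihb ?].
- by move=> a iha b ihb [ha hb]; split; split => //; [apply: iha | apply: ihb].
- move=> a iha [ha hn]; split; first exact: iha.
  by split; [split|exact: mulf_neq0].
- move=> a iha [ha hp]; split; first exact: iha.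
  split; first by split.
  by rewrite mulf_neq0 // ?gt_eqF // ?sqrtr_gt0.
- by move=> a iha ha; split => //; exact: iha.
- by move=> a iha ha; split => //; exact: iha.
- move=> a iha [ha /andP[h1 h2]]; split; first exact: iha.
  have hp : 0 < 1 + - (eval a x * eval a x) by nra.
  split; last by rewrite gt_eqF // sqrtr_gt0.
  by split => //; split => //; split.
Qed.

Lemma coord_diff (i : nat) x : differentiable (fun y : 'rV[R]_N => coord y i) x /\
  forall v, 'd (fun y : 'rV[R]_N => coord y i) x v = coord v i.
Proof.
rewrite /coord; case: insubP => [j _ _|_].
  have @f : {linear 'rV[R]_N -> R}.
    by exists (fun M : 'rV[R]_N => M ord0 j); do 2![eexists]; do ?[constructor];
     rewrite ?mxE// => ? *; rewrite ?mxE//; move=> ?; rewrite !mxE.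
  rewrite (_ : (fun _ => _) = f) //.
  have cf : continuous f by exact: coord_continuous.
  split; first exact: linear_differentiable.
  by move=> v; rewrite diff_lin.
split; first exact: differentiable_cst.
by move=> v; rewrite diff_cst.
Qed.


Lemma comp1 (f : 'rV[R]_N -> R) (g : R -> R) x dg :
  differentiable f x -> is_derive (f x) 1 g dg ->
  differentiable (fun y => g (f y)) x /\
  forall v, ('d (fun y => g (f y)) x v) = ('d f x v) * dg.
Proof.
move=> df hg.
have dg1 : differentiable g (f x).
  by apply/derivable1_diffP; case: hg.
have -> : (fun y => g (f y)) = g \o f by [].
split; first exact: differentiable_comp.
move=> v; rewrite diff_comp //= deriv1E; last by case: hg.
by rewrite derive1E derive_val.
Qed.

Lemma evalD e x : wf e x -> differentiable (eval e) x /\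
  forall v, ('d (eval e) x v) = eval (D v e) x.
Proof.
elim: e x => /=.
- by move=> i x _; exact: coord_diff.
- move=> c x _; split; first exact: differentiable_cst.
  by move=> v; rewrite diff_cst.
- move=> a iha b ihb x [/iha [da ha] /ihb [db hb]].
  have -> : (fun y => eval a y + eval b y) = eval a + eval b by [].
  split; first exact: differentiableD.
  by move=> v; rewrite diffD //= ha hb.
- move=> a iha b ihb x [/iha [da ha] /ihb [db hb]].
  have -> : (fun y => eval a y * eval b y) = eval a * eval b by [].
  split; first exact: differentiableM.
  move=> v; rewrite diffM //=.
  transitivity (eval a x * ('d (eval b) x v) + eval b x * ('d (eval a) x v)).
    by [].
  by rewrite ha hb; ring.
- move=> a iha x /iha [da ha].
  have -> : (fun y => - eval a y) = - eval a by [].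
  split; first exact: differentiableN.
  move=> v; rewrite diffN //.
  by transitivity (- ('d (eval a) x v)); [by [] | rewrite ha].
- move=> a iha x [/iha [da ha] hn].
  split; first exact: differentiableV.
  move=> v; rewrite diffV //.
  transitivity (- (eval a x) ^- 2 * ('d (eval a) x v)); first by [].
  by rewrite ha mulNr mulrC expr2.

- move=> a iha x [/iha [da ha] hp].
  have [dc hc] := @comp1 (eval a) _ x _ da (is_derive1_sqrt hp).
  split => // v; by rewrite hc ha.
- move=> a iha x /iha [da ha].
  have [dc hc] := @comp1 (eval a) _ x _ da (is_derive_cos (eval a x)).
  by split => // v; rewrite hc ha mulrN.
- move=> a iha x /iha [da ha].
  have [dc hc] := @comp1 (eval a) _ x _ da (is_derive_sin (eval a x)).
  by split => // v; rewrite hc ha.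
- move=> a iha x [/iha [da ha] hp].
  have [dc hc] := @comp1 (eval a) _ x _ da (is_derive1_acos hp).
  by split => // v; rewrite hc ha mulrN expr2.
Qed.


Lemma evalC e x : wf e x -> eval e @ x --> eval e x.
Proof. by move=> w; apply: differentiable_continuous; case: (@evalD e x w). Qed.

Lemma wf_near e x : wf e x -> \forall y \near x, wf e y.
Proof.
elim: e x => /=.
- by move=> *; near=> y.
- by move=> *; near=> y.
- move=> a iha b ihb x [/iha ha /ihb hb]; near=> y; split.
  + by near: y.
  + by near: y.
- move=> a iha b ihb x [/iha ha /ihb hb]; near=> y; split.
  + by near: y.
  + by near: y.
- by move=> a iha x /iha.
- move=> a iha x [wa hn].
  have h2 := cvgr_neq0 _ (@evalC a x wa) hn.
  have ha := iha _ wa.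
  near=> y; split; near: y; [exact: ha | exact: h2].
- move=> a iha x [wa hn].
  have h2 := cvgr_gt _ (@evalC a x wa) _ hn.
  have ha := iha _ wa.
  near=> y; split; near: y; [exact: ha | exact: h2].
- by move=> a iha x /iha.
- by move=> a iha x /iha.
- move=> a iha x [wa /andP[h1 h2]].
  have h3 := cvgr_gt _ (@evalC a x wa) _ h1.
  have h4 := cvgr_lt _ (@evalC a x wa) _ h2.
  have ha := iha _ wa.
  near=> y; split; first by near: y.
  apply/andP; split; near: y; [exact: h3 | exact: h4].
Unshelve. all: by end_near.
Qed.

Definition rowf M (F : nat -> expr) (x : 'rV[R]_N) : 'rV[R]_M :=
  \row_(j < M) eval (F j) x.

Lemma rowf_sum M F : rowf M F = \sum_(j < M) (fun y => eval (F j) y *: delta_mx 0 j).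
Proof.
rewrite fct_sumE; apply/funext => y; rewrite [LHS]row_sum_delta.
by apply: eq_bigr => j _; rewrite mxE.
Qed.

Lemma rowfD M F x : (forall j, (j < M)%N -> wf (F j) x) ->
  differentiable (@rowf M F) x /\
  forall v, 'D_v (@rowf M F) x = @rowf M (fun j => D v (F j)) x.
Proof.
move=> hw.
have hd : forall j : 'I_M, differentiable (eval (F j)) x.
  by move=> j; case: (@evalD (F j) x (hw j (ltn_ord j))).
have hd2 : forall j : 'I_M, differentiable (fun y => eval (F j) y *: (delta_mx 0 j : 'rV[R]_M)) x.
  by move=> j; apply: differentiableZl.
rewrite rowf_sum; split; first exact: differentiable_sum.
move=> v; rewrite derive_sum; last by move=> j; apply: diff_derivable.
rewrite [RHS]row_sum_delta; apply: eq_bigr => j _.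
rewrite deriveE // diffZl // mxE.
by case: (@evalD (F j) x (hw j (ltn_ord j))) => _ ->.
Qed.


Fixpoint DS (vs : seq 'rV[R]_N) e := match vs with [::] => e | v :: vs' => D v (DS vs' e) end.

Lemma wfDS vs e x : wf e x -> wf (DS vs e) x.
Proof. by elim: vs => //= v vs ih /ih; apply: wfD. Qed.

Lemma iterD_rowf M F (U : set 'rV[R]_N) : open U ->
  (forall x, U x -> forall j, (j < M)%N -> wf (F j) x) ->
  forall vs y, U y -> iterD vs (rowf M F) y = rowf M (fun j => DS vs (F j)) y.
Proof.
move=> oU hw; elim => // v vs ih y Uy /=.
have Un : \forall z \near y, U z by apply: open_nbhs_nbhs; split.
rewrite (@near_eq_derive _ _ _ _ (rowf M (fun j => DS vs (F j)))); last first.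
  by near=> z; apply: ih; near: z.
have [_ ->] := @rowfD M (fun j => DS vs (F j)) y (fun j hj => @wfDS vs (F j) y (hw y Uy j hj)).
by [].
Unshelve. all: by end_near.
Qed.

Lemma smooth_rowf M F (U : set 'rV[R]_N) : open U ->
  (forall x, U x -> forall j, (j < M)%N -> wf (F j) x) ->
  smooth_on U (rowf M F).
Proof.
move=> oU hw vs.
have key : forall x, U x -> (\forall y \near x, rowf M (fun j => DS vs (F j)) y = iterD vs (rowf M F) y)
   /\ differentiable (rowf M (fun j => DS vs (F j))) x.
  move=> x Ux; split.
    have Un : \forall z \near x, U z by apply: open_nbhs_nbhs; split.
    by near=> z; rewrite (@iterD_rowf M F U oU hw) //; near: z.
  by have [] := @rowfD M (fun j => DS vs (F j)) x (fun j hj => @wfDS vs (F j) x (hw x Ux j hj)).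
split.
  move=> x Ux; have [hn hd] := key x Ux.
  have hx : iterD vs (rowf M F) x = rowf M (fun j => DS vs (F j)) x by rewrite (@iterD_rowf M F U oU hw).
  rewrite /prop_for /continuous_at hx.
  exact: cvg_trans (near_eq_cvg hn) (differentiable_continuous hd).
move=> x v Ux; have [hn hd] := key x Ux.
have hd2 : derivable (rowf M (fun j => DS vs (F j))) x v by apply: diff_derivable.
exact: (@near_eq_derivable _ _ _ _ _ x v hn hd2).
Unshelve. all: by end_near.
Qed.

End Expr.

Arguments EVar {R}. Arguments ECst {R}. Arguments EAdd {R}. Arguments EMul {R}.
Arguments ENeg {R}. Arguments EInv {R}. Arguments ESqrt {R}. Arguments ECos {R}.
Arguments ESin {R}. Arguments EAcos {R}.
Arguments eval {R N}. Arguments wf {R N}. Arguments D {R N}. Arguments rowf {R N} M.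
Arguments DS {R N}. Arguments smooth_rowf {R N} M F U. Arguments evalC {R N} e x.
Arguments evalD {R N} e x. Arguments wf_near {R N} e x.

Set Implicit Arguments. Unset Strict Implicit.
Section Geo.
Variable R : realType.
Implicit Types (a b c : R).

Lemma inV_perm a b c : inV a b c -> inV a c b /\ inV b a c.
Proof. by case=> /andP[? ?] /andP[? ?] /andP[? ?]; split; split; apply/andP; split => //; lra. Qed.

Lemma inV_pos a b c : inV a b c -> [/\ 0 < a, 0 < b & 0 < c].
Proof. by case=> /andP[? ?] /andP[? ?] /andP[? ?]. Qed.

Lemma inV_cos a b c : inV a b c ->
  -1 < (a ^+ 2 + c ^+ 2 - b ^+ 2) / (2 * a * c) < 1.
Proof.
case=> /andP[a0 ?] /andP[b0 ?] /andP[c0 ?].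
have ac : 0 < 2 * a * c by rewrite !mulr_gt0.
apply/andP; split.
  by rewrite ltr_pdivlMr //; nra.
by rewrite ltr_pdivrMr //; nra.
Qed.

Lemma sqrt_sq_eq a b : 0 <= a -> 0 <= b -> a ^+ 2 = b ^+ 2 -> a = b.
Proof. by move=> a0 b0 /eqP; rewrite eqrXn2 // => /eqP. Qed.

Lemma key_L a b : -1 < a < 1 -> -1 < b < 1 ->
  (Num.sqrt (1 - a ^+ 2) * b + Num.sqrt (1 - b ^+ 2) * a = 0) <-> a + b = 0.
Proof.
move=> /andP[a1 a2] /andP[b1 b2].
have ha : 0 < 1 - a ^+ 2 by nra.
have hb : 0 < 1 - b ^+ 2 by nra.
have sa := sqrtr_gt0 (1 - a ^+ 2); rewrite ha in sa.
have sb := sqrtr_gt0 (1 - b ^+ 2); rewrite hb in sb.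
have qa := sqr_sqrtr (ltW ha); have qb := sqr_sqrtr (ltW hb).
split.
  move=> h.
  have e1 : (Num.sqrt (1 - a ^+ 2) * b) ^+ 2 = (Num.sqrt (1 - b ^+ 2) * a) ^+ 2.
    by rewrite (_ : Num.sqrt (1 - a ^+ 2) * b = - (Num.sqrt (1 - b ^+ 2) * a)) ?sqrrN //; lra.
  rewrite !exprMn qa qb in e1.
  have e2 : b ^+ 2 = a ^+ 2 by nra.
  have : (b - a) * (b + a) = 0 by rewrite -subr_sqr e2 subrr.
  move/eqP; rewrite mulf_eq0 => /orP[|]; last by rewrite addrC => /eqP.
  rewrite subr_eq0 => /eqP ba; subst b.
  have : Num.sqrt (1 - a ^+ 2) * (a + a) = 0 by rewrite mulrDr; lra.
  by move/eqP; rewrite mulf_eq0 gt_eqF //= => /eqP; lra.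
move=> h; have -> : b = - a by lra.
by rewrite sqrrN; lra.
Qed.

Lemma law_sines (t0 x0 t1 : R) : inV t0 x0 t1 ->
  t1 * Num.sqrt (1 - ((t0 ^+ 2 + t1 ^+ 2 - x0 ^+ 2) / (2 * t0 * t1)) ^+ 2) =
  x0 * Num.sqrt (1 - ((t0 ^+ 2 + x0 ^+ 2 - t1 ^+ 2) / (2 * t0 * x0)) ^+ 2).
Proof.
move=> h; have [h1 h2] := inV_perm h.
have [p0 p1 p2] := inV_pos h.
have /andP[c1 c2] := inV_cos h.
have /andP[d1 d2] := inV_cos h1.
set c := (_ / (2 * t0 * t1)) in c1 c2 *.
set d := (_ / (2 * t0 * x0)) in d1 d2 *.
have hc : 0 <= 1 - c ^+ 2 by nra.
have hd : 0 <= 1 - d ^+ 2 by nra.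
apply: sqrt_sq_eq.
- by rewrite mulr_ge0 ?sqrtr_ge0 // ltW.
- by rewrite mulr_ge0 ?sqrtr_ge0 // ltW.
rewrite exprMn sqr_sqrtr // [X in _ = X]exprMn sqr_sqrtr // /c /d.
field.
by rewrite !gt_eqF //; lra.
Qed.


Lemma K3 (t0 x0 t1 x1 t2 : R) : inV t0 x0 t1 -> inV t1 x1 t2 ->
  (t2 * Num.sqrt (1 - ((t0^+2 + t1^+2 - x0^+2)/(2*t0*t1))^+2)
   - t1 * (Num.sqrt (1 - ((t0^+2 + t1^+2 - x0^+2)/(2*t0*t1))^+2)
             * ((t1^+2 + t2^+2 - x1^+2)/(2*t1*t2))
           + ((t0^+2 + t1^+2 - x0^+2)/(2*t0*t1))
             * Num.sqrt (1 - ((t1^+2 + t2^+2 - x1^+2)/(2*t1*t2))^+2))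
   + t0 * Num.sqrt (1 - ((t1^+2 + t2^+2 - x1^+2)/(2*t1*t2))^+2) = 0)
  <-> Theta t0 x0 t1 x1 t2 = 0.
Proof.
move=> h g.
have [p0 p1 p2] := inV_pos h.
have [_ q1 q2] := inV_pos g.
have [hA _] := inV_perm h.
have [g1 _] := inV_perm g.
have [_ g2] := inV_perm g1.
have [g3 _] := inV_perm g2.
have lsA := law_sines h.
have lsC := law_sines g3.
have /andP[a1 a2] := inV_cos hA.
have /andP[b1 b2] := inV_cos (proj1 (inV_perm g3)).
set c1 := (t0^+2 + t1^+2 - x0^+2)/(2*t0*t1) in lsA *.
set c2 := (t1^+2 + t2^+2 - x1^+2)/(2*t1*t2).
set cA := (t0^+2 + x0^+2 - t1^+2)/(2*t0*x0) in lsA a1 a2 *.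
set cC := (t2^+2 + x1^+2 - t1^+2)/(2*t2*x1) in lsC b1 b2.
have ec2 : (t2 ^+ 2 + t1 ^+ 2 - x1 ^+ 2) / (2 * t2 * t1) = c2.
  by rewrite /c2 [t2 ^+ 2 + _]addrC [2 * t2 * t1]mulrAC.
rewrite ec2 in lsC.
set s1 := Num.sqrt (1 - c1 ^+ 2) in lsA *.
set s2 := Num.sqrt (1 - c2 ^+ 2) in lsC *.
set sA := Num.sqrt (1 - cA ^+ 2) in lsA.
set sC := Num.sqrt (1 - cC ^+ 2) in lsC.
have e1 : t2 - t1 * c2 = x1 * cC.
  by rewrite /c2 /cC; field; rewrite !gt_eqF.
have e2 : t0 - t1 * c1 = x0 * cA.
  by rewrite /c1 /cA; field; rewrite !gt_eqF.
have eT : Theta t0 x0 t1 x1 t2 = 2 * t0 * x0 * t2 * x1 * (cA + cC).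
  by rewrite /Theta /cA /cC; field; rewrite !gt_eqF.
have eP : t1 * (t2 * s1 - t1 * (s1 * c2 + c1 * s2) + t0 * s2)
          = x0 * x1 * (sA * cC + sC * cA).
  transitivity ((t1 * s1) * (t2 - t1 * c2) + (t1 * s2) * (t0 - t1 * c1)); first by ring.
  by rewrite e1 e2 lsA lsC; ring.
have kL := key_L (a:=cA) (b:=cC).
have nz1 : x0 * x1 != 0 by rewrite mulf_neq0 // gt_eqF.
have nz2 : 2 * t0 * x0 * t2 * x1 != 0 by rewrite !mulf_neq0 // gt_eqF.
have nz3 : t1 != 0 by rewrite gt_eqF.
have hab : -1 < cA < 1 by apply/andP.
have hcb : -1 < cC < 1 by apply/andP.
rewrite eT; split.
  move=> h0; have : sA * cC + sC * cA = 0.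
    have : x0 * x1 * (sA * cC + sC * cA) = 0 by rewrite -eP h0 mulr0.
    by move/eqP; rewrite mulf_eq0 (negbTE nz1) /= => /eqP.
  by move/(kL hab hcb) => ->; rewrite mulr0.
move/eqP; rewrite mulf_eq0 (negbTE nz2) /= => /eqP.
move/(kL hab hcb) => k.
have : t1 * (t2 * s1 - t1 * (s1 * c2 + c1 * s2) + t0 * s2) = 0 by rewrite eP k mulr0.
by move/eqP; rewrite mulf_eq0 (negbTE nz3) /= => /eqP.
Qed.


Lemma P_ident (A B th a b : R) :
  (A * cos (th + a + b) + B * sin (th + a + b)) * sin a
  - (A * cos (th + a) + B * sin (th + a)) * sin (a + b)
  + (A * cos th + B * sin th) * sin b = 0.
Proof.
have e := cos2Dsin2 a.
transitivity ((A * cos th + B * sin th) * sin b * (1 - (cos a ^+ 2 + sin a ^+ 2))).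
  by rewrite !(cosD, sinD); ring.
by rewrite e subrr mulr0.
Qed.

Lemma circ (t th a b : R) :
  (t * cos th - a) ^+ 2 + (t * sin th - b) ^+ 2 - (a ^+ 2 + b ^+ 2)
  = t * (t - 2 * (a * cos th + b * sin th)).
Proof.
have e := cos2Dsin2 th.
transitivity (t ^+ 2 * (cos th ^+ 2 + sin th ^+ 2) - 2 * t * (a * cos th + b * sin th)).
  by ring.
by rewrite e; ring.
Qed.

End Geo.

Section Poly.
Variable R : realType.
Variable n : nat.
Hypothesis hn : (4 <= n)%N.
Local Notation N := (2 * n - 3)%N.
Implicit Types w : 'rV[R]_N.

Lemma theta0 m (w : 'rV[R]_m) : theta w 0 = 0.
Proof. by rewrite /theta big_ord0. Qed.

Lemma thetaS m (w : 'rV[R]_m) k : theta w k.+1 = theta w k + alphak w k.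
Proof. by rewrite /theta big_ord_recr. Qed.

Definition Pk m (w : 'rV[R]_m) k := tt w 0 * cos (theta w k) +
  ((tt w 1 - tt w 0 * cos (alphak w 0)) / sin (alphak w 0)) * sin (theta w k).

Definition Phi m (w : 'rV[R]_m) k :=
  tt w k.+2 * sin (alphak w k) - tt w k.+1 * sin (alphak w k + alphak w k.+1)
  + tt w k * sin (alphak w k.+1).

Lemma Om_inV w k : Omega R n w -> (k < n - 2)%N -> inV (tt w k) (xx w k) (tt w k.+1).
Proof. by case=> _ [h _]; apply: h. Qed.

Lemma Om_tpos w k : Omega R n w -> (k <= n - 2)%N -> 0 < tt w k.
Proof.
move=> Om hk; case: (ltnP k (n - 2)) => hk2.
  by have [] := inV_pos (Om_inV Om hk2).
have e : k = (n - 3).+1 by lia.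
have [_ _] := inV_pos (Om_inV (k := n - 3) Om ltac:(lia)).
by rewrite -e.
Qed.

Lemma Om_alpha w k : Omega R n w -> (k < n - 2)%N ->
  let c := (tt w k ^+ 2 + tt w k.+1 ^+ 2 - xx w k ^+ 2) / (2 * tt w k * tt w k.+1) in
  [/\ cos (alphak w k) = c, sin (alphak w k) = Num.sqrt (1 - c ^+ 2),
      0 < alphak w k < pi & 0 < sin (alphak w k)].
Proof.
move=> Om hk c.
have /andP[c1 c2] := inV_cos (Om_inV Om hk).
have ca : alphak w k = acos c by [].
have cI : c \in `[(-1), 1] by rewrite in_itv /= !ltW.
have a0 : 0 < alphak w k by rewrite ca acos_gt0 // ltW.
have api : alphak w k < pi by rewrite ca acos_ltpi // c1 ltW.
have sp : 0 < sin (alphak w k) by apply: sin_gt0_pi; rewrite a0 api.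
split => //; last by rewrite a0.
- by rewrite ca acosK.
- by rewrite ca sin_acos // ltW // ltW.
Qed.


Lemma Pk0 m (w : 'rV[R]_m) : Pk w 0 = tt w 0.
Proof. by rewrite /Pk theta0 cos0 sin0; ring. Qed.

Lemma Pk1 m (w : 'rV[R]_m) : sin (alphak w 0) != 0 -> Pk w 1 = tt w 1.
Proof. by move=> h; rewrite /Pk thetaS theta0 add0r; field. Qed.

Lemma K1 w : Omega R n w ->
  (inscribable w <-> forall k, (2 <= k <= n - 2)%N -> tt w k = Pk w k).
Proof.
move=> Om.
have [_ _ _ s0] := Om_alpha Om (k := 0) ltac:(lia).
have s0n : sin (alphak w 0) != 0 by rewrite gt_eqF.
have t0p := Om_tpos Om (k := 0) ltac:(lia).
split.
  case=> a [b [r [r0 [e0 ek]]]] k /andP[k2 kn].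
  have tk : forall j, (j < n - 1)%N -> tt w j = 2 * (a * cos (theta w j) + b * sin (theta w j)).
    move=> j hj; have := ek j hj; rewrite /vertex /= => e.
    have tp := Om_tpos Om (k := j) ltac:(lia).
    have := circ (tt w j) (theta w j) a b.
    rewrite e -e0 !sub0r !sqrrN subrr => /esym /eqP.
    rewrite mulf_eq0 gt_eqF //= subr_eq0 => /eqP //.
  have e0' := tk 0 ltac:(lia); have e1' := tk 1 ltac:(lia).
  rewrite theta0 cos0 sin0 in e0'; rewrite thetaS theta0 add0r in e1'.
  rewrite (tk k ltac:(lia)) /Pk e0' e1'.
  by field.
move=> h.
pose a := tt w 0 / 2; pose b := (tt w 1 - tt w 0 * cos (alphak w 0)) / sin (alphak w 0) / 2.
have ab : 0 < a ^+ 2 + b ^+ 2.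
  have := sqr_ge0 b; have : 0 < a ^+ 2 by rewrite exprn_gt0 // divr_gt0.
  lra.
exists a, b, (Num.sqrt (a ^+ 2 + b ^+ 2)); split; first by rewrite sqrtr_gt0.
split; first by rewrite sqr_sqrtr ?ltW // !sub0r !sqrrN.
move=> k hk; rewrite sqr_sqrtr ?ltW //; apply/eqP; rewrite -subr_eq0.
rewrite /vertex /= circ mulf_eq0; apply/orP; right; rewrite subr_eq0; apply/eqP.
have -> : tt w k = Pk w k.
  case: (ltnP k 2) => k2.
    by case: k k2 hk => [|[|//]] _ _; [rewrite Pk0 | rewrite Pk1].
  by apply: h; lia.
by rewrite /Pk /a /b; field.
Qed.

Lemma K2 w : Omega R n w ->
  ((forall k, (2 <= k <= n - 2)%N -> tt w k = Pk w k) <->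
   (forall k, (k < n - 3)%N -> Phi w k = 0)).
Proof.
move=> Om.
have s0n : sin (alphak w 0) != 0.
  by have [_ _ _ s0] := Om_alpha Om (k := 0) ltac:(lia); rewrite gt_eqF.
pose d k := tt w k - Pk w k.
have PhiE : forall k, Phi w k = d k.+2 * sin (alphak w k)
     - d k.+1 * sin (alphak w k + alphak w k.+1) + d k * sin (alphak w k.+1).
  move=> k; have := P_ident (tt w 0) ((tt w 1 - tt w 0 * cos (alphak w 0)) / sin (alphak w 0))
    (theta w k) (alphak w k) (alphak w k.+1).
  rewrite -!thetaS -/(Pk w k) -/(Pk w k.+1) -/(Pk w k.+2) /Phi /d => e.
  by rewrite -[LHS]subr0 -{1}e; ring.
have d0 : d 0 = 0 by rewrite /d Pk0 subrr.
have d1 : d 1 = 0 by rewrite /d Pk1 // subrr.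
split.
  move=> h k hk; rewrite PhiE.
  have -> : d k.+2 = 0 by rewrite /d h ?subrr //; lia.
  have -> : d k.+1 = 0.
    case: k hk => [|k] hk; first exact: d1.
    by rewrite /d h ?subrr //; lia.
  have -> : d k = 0.
    case: k hk => [|[|k]] hk; [exact: d0 | exact: d1 |].
    by rewrite /d h ?subrr //; lia.
  by rewrite !mul0r subrr addr0.
move=> h.
suff : forall k, (k <= n - 3)%N -> d k = 0 /\ d k.+1 = 0.
  move=> H k /andP[k2 kn]; have [_] := H k.-1 ltac:(lia).
  by rewrite prednK ?(leq_trans _ k2) // => /eqP; rewrite subr_eq0 => /eqP.
elim => [_|k ih hk]; first by split.
have [ih1 ih2] := ih ltac:(lia); split => //.
have := h k ltac:(lia); rewrite PhiE ih1 ih2 !mul0r subr0 addr0 => /eqP.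
have [_ _ _ sk] := Om_alpha Om (k := k) ltac:(lia).
by rewrite mulf_eq0 (gt_eqF sk) orbF => /eqP.
Qed.

Lemma K3w w k : Omega R n w -> (k < n - 3)%N ->
  (Phi w k = 0 <-> Theta (tt w k) (xx w k) (tt w k.+1) (xx w k.+1) (tt w k.+2) = 0).
Proof.
move=> Om hk.
have h1 := Om_inV Om (k := k) ltac:(lia).
have h2 := Om_inV Om (k := k.+1) ltac:(lia).
have [c1 s1 _ _] := Om_alpha Om (k := k) ltac:(lia).
have [c2 s2 _ _] := Om_alpha Om (k := k.+1) ltac:(lia).
rewrite -(K3 h1 h2) /Phi sinD c1 s1 c2 s2.
by [].
Qed.

Lemma gamma0 w : gamma w = 0 <->
  forall k, (k < n - 3)%N -> Theta (tt w k) (xx w k) (tt w k.+1) (xx w k.+1) (tt w k.+2) = 0.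
Proof.
split.
  move=> /matrixP h k hk; have := h ord0 (Ordinal hk).
  by rewrite !mxE.
move=> h; apply/matrixP => i j; rewrite !mxE; exact: h.
Qed.

Lemma part1 : Gamma R n = Omega R n `&` [set w | gamma w = 0].
Proof.
apply/seteqP; split => w /=.
  case=> Om ins; split => //; apply/gamma0 => k hk.
  apply/(K3w Om hk); move: k hk; apply/(K2 Om); exact/(K1 Om).
case=> Om /gamma0 g; split => //; apply/(K1 Om); apply/(K2 Om) => k hk.
by apply/(K3w Om hk); apply: g.
Qed.

End Poly.
Set Implicit Arguments. Unset Strict Implicit.

Section Chart.
Variable R : realType.
Variable n : nat.
Hypothesis hn : (4 <= n)%N.
Local Notation N := (2 * n - 3)%N.
Local Notation ex := (expr R).
Implicit Types (w x y : 'rV[R]_N).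

Definition Et k : ex := EVar (2 * k)%N.
Definition Ex k : ex := EVar (2 * k + 1)%N.
Definition sq (e : ex) := EMul e e.
Definition Esub (a b : ex) := EAdd a (ENeg b).
Definition EA k : ex := EAcos (EMul (Esub (EAdd (sq (Et k)) (sq (Et k.+1))) (sq (Ex k)))
   (EInv (EMul (EMul (ECst 2) (Et k)) (Et k.+1)))).
Fixpoint Eth k : ex := match k with 0 => ECst 0 | k'.+1 => EAdd (Eth k') (EA k') end.
Definition EPk k : ex := EAdd (EMul (Et 0) (ECos (Eth k)))
  (EMul (EMul (Esub (Et 1) (EMul (Et 0) (ECos (EA 0)))) (EInv (ESin (EA 0)))) (ESin (Eth k))).
Definition PhiE (i : nat) : ex :=
  if i == 0%N then Et 0 else if i == 1%N then Et 1 else if (i < n)%N then EA (i - 2)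
  else Esub (Et (i - n + 2)) (EPk (i - n + 2)).

Fixpoint Eth' k : ex := match k with 0 => ECst 0 | k'.+1 => EAdd (Eth' k') (EVar k'.+2) end.
Definition EQ k : ex := EAdd (EMul (EVar 0) (ECos (Eth' k)))
  (EMul (EMul (Esub (EVar 1) (EMul (EVar 0) (ECos (EVar 2)))) (EInv (ESin (EVar 2)))) (ESin (Eth' k))).
Definition PT k : ex := if k == 0%N then EVar 0 else if k == 1%N then EVar 1
  else EAdd (EVar (k + n - 2)) (EQ k).
Definition PX k : ex := ESqrt (Esub (EAdd (sq (PT k)) (sq (PT k.+1)))
  (EMul (EMul (EMul (ECst 2) (PT k)) (PT k.+1)) (ECos (EVar k.+2)))).
Definition PsiE (i : nat) : ex := if odd i then PX i./2 else PT i./2.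

Arguments EA : simpl never.
Definition phi := @rowf R N N PhiE.
Definition psi := @rowf R N N PsiE.

Lemma evalEA w k : eval (EA k) w = alphak w k.
Proof. by rewrite /EA /= /alphak /alpha /tt /xx !expr2. Qed.

Lemma evalEth w k : eval (Eth k) w = theta w k.
Proof.
elim: k => [|k ih]; first by rewrite /= theta0.
by rewrite thetaS -ih -evalEA.
Qed.

Lemma evalEPk w k : eval (EPk k) w = Pk w k.
Proof. by rewrite /Pk -!evalEth -!evalEA. Qed.

Lemma coord_ord m (w : 'rV[R]_m) (i : 'I_m) : coord w i = w ord0 i.
Proof. by rewrite /coord insubT //= => h; congr (w _ _); apply: val_inj. Qed.

Lemma coord_rowf M F w i : (i < M)%N -> coord (rowf M F w) i = eval (F i) w.
Proof. by move=> h; rewrite /coord insubT /= mxE. Qed.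


Lemma N_gt k : (k <= n - 2)%N -> (2 * k < N)%N.
Proof. lia. Qed.

Lemma phi_c0 w : coord (phi w) 0 = tt w 0.
Proof. by rewrite coord_rowf //; lia. Qed.

Lemma phi_c1 w : coord (phi w) 1 = tt w 1.
Proof. by rewrite coord_rowf //; lia. Qed.

Lemma phi_cA w j : (j < n - 2)%N -> coord (phi w) j.+2 = alphak w j.
Proof.
move=> hj; rewrite coord_rowf; last by lia.
rewrite /PhiE /= (_ : (j.+2 < n)%N = true); last by apply/idP; lia.
by rewrite subn2 evalEA.
Qed.

Lemma phi_cD w j : (j < n - 3)%N -> coord (phi w) (n + j) = tt w j.+2 - Pk w j.+2.
Proof.
move=> hj; rewrite coord_rowf; last by lia.
rewrite /PhiE (_ : (n + j == 0)%N = false); last by apply/negbTE; lia.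
rewrite (_ : (n + j == 1)%N = false); last by apply/negbTE; lia.
rewrite (_ : (n + j < n)%N = false); last by apply/negbTE; lia.
rewrite (_ : (n + j - n + 2 = j.+2)%N); last by lia.
by rewrite /Esub -evalEPk.
Qed.

Lemma evalEth' y k : eval (Eth' k) y = \sum_(j < k) coord y j.+2.
Proof. by elim: k => [|k ih] /=; rewrite ?big_ord0 // big_ord_recr /= ih. Qed.

Lemma evalEth'_phi w k : (k <= n - 2)%N -> eval (Eth' k) (phi w) = theta w k.
Proof.
move=> hk; rewrite evalEth' /theta; apply: eq_bigr => j _.
by rewrite phi_cA //; have := ltn_ord j; lia.
Qed.

Lemma evalEQ_phi w k : (k <= n - 2)%N -> eval (EQ k) (phi w) = Pk w k.
Proof.
move=> hk; rewrite /EQ /Esub /= evalEth'_phi // phi_c0 phi_c1 phi_cA; last by lia.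
by rewrite /Pk.
Qed.

Lemma evalPT_phi w k : (k <= n - 2)%N -> eval (PT k) (phi w) = tt w k.
Proof.
move=> hk; case: k hk => [|[|k]] hk.
- exact: phi_c0.
- exact: phi_c1.
transitivity (coord (phi w) (k.+2 + n - 2) + eval (EQ k.+2) (phi w)); first by [].
rewrite (_ : (k.+2 + n - 2 = n + k)%N); last by lia.
rewrite phi_cD; last by lia.
by rewrite evalEQ_phi // subrK.
Qed.

Lemma evalPX_phi w k : Omega R n w -> (k < n - 2)%N -> eval (PX k) (phi w) = xx w k.
Proof.
move=> Om hk; rewrite /PX /Esub /sq /=.
rewrite !evalPT_phi; try lia.
rewrite phi_cA //.
have [c _ _ _] := Om_alpha Om hk.
have [p0 p1 p2] := inV_pos (Om_inV Om hk).
rewrite c.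
rewrite [X in Num.sqrt X](_ : _ = xx w k ^+ 2); first by rewrite sqrtr_sqr gtr0_norm.
by field; rewrite !gt_eqF.
Qed.

Lemma psi_phi w : Omega R n w -> psi (phi w) = w.
Proof.
move=> Om; apply/rowP => i; rewrite -coord_ord coord_rowf //.
have hi := ltn_ord i.
rewrite /PsiE; case: ifP => ho.
  have e : (2 * i./2 + 1 = i)%N.
    by rewrite -[in RHS](odd_double_half i) ho -muln2; lia.
  rewrite evalPX_phi //; last by lia.
  by rewrite /xx e coord_ord.
have e : (2 * i./2 = i)%N.
  by rewrite -[in RHS](odd_double_half i) ho -muln2; lia.
rewrite evalPT_phi //; last by lia.
by rewrite /tt e coord_ord.
Qed.


Definition Vset : set 'rV[R]_N := [set y | [/\ 0 < coord y 0, 0 < coord y 1,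
  (forall j, (j < n - 2)%N -> 0 < coord y j.+2 < pi),
  \sum_(j < n - 2) coord y j.+2 < 2 * pi &
  (forall k, (2 <= k <= n - 2)%N -> 0 < eval (PT k) y)]].

Lemma cos_open (a : R) : 0 < a < pi -> -1 < cos a < 1.
Proof.
move=> /andP[a0 api].
have aI : a \in `[0, pi] by rewrite in_itv /= !ltW.
have h1 := cos_geN1 a; have h2 := cos_le1 a.
apply/andP; split; rewrite lt_neqAle ?h1 ?h2 andbT.
  apply/negP => /eqP e; have := cosK aI; rewrite -e acosN1 => e2; lra.
apply/negP => /eqP e; have := cosK aI; rewrite e acos1 => e2; lra.
Qed.

Lemma tri (t t' c : R) : 0 < t -> 0 < t' -> -1 < c < 1 ->
  let x := Num.sqrt (t * t + t' * t' + - (2 * t * t' * c)) in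
  [/\ inV t x t', 0 < x & (t ^+ 2 + t' ^+ 2 - x ^+ 2) / (2 * t * t') = c].
Proof.
move=> t0 t'0 /andP[c1 c2] x.
have h3 : 0 < t * t' * (1 - c) by rewrite !mulr_gt0 // subr_gt0.
have q0 : 0 < t * t + t' * t' + - (2 * t * t' * c).
  have -> : t * t + t' * t' + - (2 * t * t' * c) = (t - t') ^+ 2 + 2 * (t * t' * (1 - c)) by ring.
  have := sqr_ge0 (t - t'); lra.
have x0 : 0 < x by rewrite sqrtr_gt0.
have x2 : x ^+ 2 = t * t + t' * t' + - (2 * t * t' * c) by rewrite sqr_sqrtr // ltW.
split => //.
  have sq_lt : forall a b : R, 0 <= a -> 0 <= b -> a ^+ 2 < b ^+ 2 -> a < b.
    by move=> a b a0 b0 h; nra.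
  have hA : `|t - t'| < x.
    apply: (sq_lt _ _ (normr_ge0 _) (ltW x0)).
    by rewrite real_normK ?num_real // x2; nra.
  have hB : x < t + t'.
    have tt0 : 0 <= t + t' by rewrite addr_ge0 // ltW.
    by apply: (sq_lt _ _ (ltW x0) tt0); rewrite x2; nra.
  have n1 := ler_norm (t - t'); have n2 := ler_norm (t' - t).
  rewrite distrC in n2.
  split; apply/andP; split => //; lra.
by rewrite x2; field; rewrite !gt_eqF.
Qed.


Lemma psi_t y k : (k <= n - 2)%N -> tt (psi y) k = eval (PT k) y.
Proof.
move=> hk; rewrite /tt coord_rowf; last by lia.
by rewrite /PsiE !(mul2n k) odd_double /= doubleK.
Qed.

Lemma psi_x y k : (k < n - 2)%N -> xx (psi y) k = eval (PX k) y.
Proof.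
move=> hk; rewrite /xx coord_rowf; last by lia.
rewrite /PsiE addn1 !(mul2n k) /= odd_double /=.
by rewrite uphalf_double.
Qed.

Section V.
Variable y : 'rV[R]_N.
Hypothesis Vy : Vset y.

Lemma V_PT k : (k <= n - 2)%N -> 0 < eval (PT k) y.
Proof.
case: Vy => h0 h1 _ _ h; case: k => [|[|k]] hk //.
by apply: h; lia.
Qed.

Lemma V_cos j : (j < n - 2)%N -> -1 < cos (coord y j.+2) < 1.
Proof. by case: Vy => _ _ h _ _ hj; apply/cos_open/h. Qed.

Lemma V_tri k : (k < n - 2)%N ->
  [/\ inV (tt (psi y) k) (xx (psi y) k) (tt (psi y) k.+1), 0 < xx (psi y) k &
   alphak (psi y) k = coord y k.+2].
Proof.
move=> hk.
have [h1 h2 h3] := tri (V_PT (k := k) ltac:(lia)) (V_PT (k := k.+1) ltac:(lia)) (V_cos hk).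
rewrite !psi_t ?psi_x; try lia.
have -> : eval (PX k) y = Num.sqrt (eval (PT k) y * eval (PT k) y + eval (PT k.+1) y * eval (PT k.+1) y
   + - (2 * eval (PT k) y * eval (PT k.+1) y * cos (coord y k.+2))) by [].
split => //.
rewrite /alphak /alpha !psi_t ?psi_x; try lia.
rewrite h3 cosK //.
by case: Vy => _ _ h _ _; have /andP[? ?] := h k hk; rewrite in_itv /= !ltW.
Qed.


Lemma psi_U : Omega R n (psi y).
Proof.
split.
  move=> i; rewrite -coord_ord; have hi := ltn_ord i.
  case: (boolP (odd i)) => ho.
    have e : (2 * i./2 + 1 = i)%N.
      by rewrite -[in RHS](odd_double_half i) ho -muln2; lia.
    have [_ p _] := V_tri (k := i./2) ltac:(lia).
    by move: p; rewrite /xx e.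
  have e : (2 * i./2 = i)%N.
    by rewrite -[in RHS](odd_double_half i) (negbTE ho) -muln2; lia.
  have := V_PT (k := i./2) ltac:(lia); rewrite -psi_t; last by lia.
  by rewrite /tt e.
split; first by move=> k hk; have [] := V_tri hk.
case: Vy => _ _ _ hs _; apply: le_lt_trans hs; rewrite le_eqVlt; apply/orP; left.
apply/eqP; apply: eq_bigr => j _.
by have [_ _ ->] := V_tri (ltn_ord j).
Qed.

Lemma theta_psi k : (k <= n - 2)%N -> theta (psi y) k = eval (Eth' k) y.
Proof.
move=> hk; rewrite evalEth' /theta; apply: eq_bigr => j _.
by have [_ _ ->] := V_tri (k := j) ltac:(have := ltn_ord j; lia).
Qed.

Lemma Pk_psi k : (k <= n - 2)%N -> Pk (psi y) k = eval (EQ k) y.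
Proof.
move=> hk; rewrite /Pk theta_psi // !psi_t; try lia.
have [_ _ ->] := V_tri (k := 0) ltac:(lia).
by [].
Qed.

Lemma phi_psi : phi (psi y) = y.
Proof.
apply/rowP => i; rewrite -[RHS]coord_ord -coord_ord coord_rowf //.
have hi := ltn_ord i.
rewrite /PhiE; case: eqP => [e0|h0].
  by rewrite e0 -[eval (Et 0) _]/(tt (psi y) 0) psi_t.
case: eqP => [e1|h1].
  by rewrite e1 -[eval (Et 1) _]/(tt (psi y) 1) psi_t //; lia.
case: ifP => hin.
  rewrite evalEA; have [_ _ ->] := V_tri (k := (i - 2)%N) ltac:(lia).
  by congr coord; lia.
transitivity (tt (psi y) (i - n + 2) - Pk (psi y) (i - n + 2)).
  by rewrite -evalEPk.
rewrite psi_t ?Pk_psi; try lia.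
have [k ek] : exists k, (i - n + 2 = k.+2)%N by exists (i - n)%N; lia.
rewrite ek.
transitivity (coord y (k.+2 + n - 2) + eval (EQ k.+2) y - eval (EQ k.+2) y); first by [].
by rewrite addrK; congr coord; lia.
Qed.

End V.

Lemma phi_V w : Omega R n w -> Vset (phi w).
Proof.
move=> Om; split.
- by rewrite phi_c0; apply: (Om_tpos hn Om); lia.
- by rewrite phi_c1; apply: (Om_tpos hn Om); lia.
- by move=> j hj; rewrite phi_cA //; have [_ _ ] := Om_alpha Om hj.
- case: Om => _ [_ hs]; apply: le_lt_trans hs; rewrite le_eqVlt; apply/orP; left.
  by apply/eqP; apply: eq_bigr => j _; rewrite phi_cA.
- by move=> k hk; rewrite evalPT_phi; [apply: (Om_tpos hn Om) |]; lia.
Qed.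


Lemma wfEA x k : Omega R n x -> (k < n - 2)%N -> wf (EA k) x.
Proof.
move=> Om hk.
have [p0 p1 p2] := inV_pos (Om_inV Om hk).
have := inV_cos (Om_inV Om hk).
rewrite /EA /= /tt /xx !expr2 => hc.
split; last exact: hc.
split; first by [].
split; first by [].
by rewrite !mulf_neq0 // gt_eqF.
Qed.

Lemma wfEth x k : Omega R n x -> (k <= n - 2)%N -> wf (Eth k) x.
Proof.
move=> Om; elim: k => [|k ih] hk //=; split; first by apply: ih; apply: ltnW.
by apply: (wfEA Om).
Qed.

Lemma wfEPk x k : Omega R n x -> (k <= n - 2)%N -> wf (EPk k) x.
Proof.
move=> Om hk.
have w0 := wfEA Om (k := 0) ltac:(lia).
have [_ _ _ s0] := Om_alpha Om (k := 0) ltac:(lia).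
rewrite -evalEA in s0.
rewrite /EPk; cbn -[EA Eth].
split; split => //; try exact: wfEth.
split; first by split => //; split => //; split.
by split => //; rewrite gt_eqF.
Qed.

Lemma wfPhi x : Omega R n x -> forall i, (i < N)%N -> wf (PhiE i) x.
Proof.
move=> Om i hi; rewrite /PhiE.
case: eqP => // h0; case: eqP => // h1; case: ifP => h.
  by apply: (wfEA Om); lia.
split => //; apply: (wfEPk Om); lia.
Qed.

Lemma wfPT y k : Vset y -> wf (PT k) y.
Proof.
move=> Vy; rewrite /PT; case: eqP => // _; case: eqP => // _.
have s2 : 0 < sin (coord y 2).
  by case: Vy => _ _ h _ _; apply: sin_gt0_pi; apply: (h 0%N); lia.
split => //; cbn -[Eth'].
have we : forall j, wf (Eth' j) y by elim => //=.
have sn : sin (coord y 2) != 0 by rewrite gt_eqF.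
by do !split => //.
Qed.

Lemma wfPsi y : Vset y -> forall i, (i < N)%N -> wf (PsiE i) y.
Proof.
move=> Vy i hi; rewrite /PsiE; case: ifP => ho; last exact: wfPT.
rewrite /PX; cbn -[PT].
split; first by do !split; apply: wfPT.
have hk : (i./2 < n - 2)%N.
  have := odd_double_half i; rewrite ho -muln2; lia.
have := tri (V_PT Vy (k := i./2) ltac:(lia)) (V_PT Vy (k := i./2.+1) ltac:(lia)) (V_cos Vy hk).
case=> _ h _; move: h; rewrite sqrtr_gt0.
by [].
Qed.


Lemma near_pos (e : ex) x : wf e x -> 0 < eval e x -> \forall y \near x, 0 < eval e y.
Proof. by move=> w h; apply: (cvgr_gt _ (evalC e x w)). Qed.

Lemma near_lt (e : ex) x c : wf e x -> eval e x < c -> \forall y \near x, eval e y < c.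
Proof. by move=> w h; apply: (cvgr_lt _ (evalC e x w)). Qed.

Lemma near_forall_lt (m : nat) (P : nat -> 'rV[R]_N -> Prop) x :
  (forall j, (j < m)%N -> \forall y \near x, P j y) ->
  \forall y \near x, forall j, (j < m)%N -> P j y.
Proof.
move=> h.
have H0 : \forall y \near x, forall j : 'I_m, P j y.
  exact: (@filter_forall _ _ (fun (j : 'I_m) y => P j y) _ _ (fun j => h j (ltn_ord j))).
apply: (filterS _ H0) => y H j hj; exact: (H (Ordinal hj)).
Qed.

Lemma near_lin x (a b c : nat) : coord x c < coord x a + coord x b ->
  \forall y \near x, coord y c < coord y a + coord y b.
Proof.
move=> h.
have := @near_pos (EAdd (EAdd (EVar a) (EVar b)) (ENeg (EVar c))) x ltac:(by []).
rewrite /=; move=> /(_ ltac:(rewrite subr_gt0; exact: h)).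
by move=> H0; apply: (filterS _ H0) => y; rewrite /= subr_gt0.
Qed.

Lemma near_var x (a : nat) : 0 < coord x a -> \forall y \near x, 0 < coord y a.
Proof. by move=> h; apply: (@near_pos (EVar a) x). Qed.

Lemma open_Omega : open (Omega R n).
Proof.
rewrite openE => x Om; rewrite /interior.
have Om' := Om; case: Om' => hp [hv hs].
have h1 : \forall y \near x, forall i : 'I_N, 0 < (y : 'rV[R]_N) ord0 i.
  have hi : forall i : 'I_N, \forall y \near x, 0 < (y : 'rV[R]_N) ord0 i.
    move=> i; have := @near_var x i; rewrite coord_ord => /(_ (hp i)).
    by move=> H0; apply: (filterS _ H0) => y; rewrite coord_ord.
  exact: (@filter_forall _ _ (fun (i : 'I_N) (y : 'rV[R]_N) => 0 < y ord0 i) _ _ hi).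
have h2 : \forall y \near x, forall k, (k < n - 2)%N -> inV (tt y k) (xx y k) (tt y k.+1).
  apply: near_forall_lt => k hk.
  have := hv k hk; case=> /andP[a1 a2] /andP[b1 b2] /andP[c1 c2].
  have := near_var a1; have := near_var b1; have := near_var c1.
  have := near_lin a2; have := near_lin b2; have := near_lin c2.
  move=> n1 n2 n3 n4 n5 n6; near=> y.
  split; apply/andP; split.
  all: first [ near: y; assumption | idtac ].
have h3 : \forall y \near x, \sum_(k < n - 2) alphak y k < 2 * pi.
  have := @near_lt (Eth (n - 2)) x (2 * pi) (wfEth Om (leqnn _)).
  rewrite evalEth => /(_ hs).
  by move=> H0; apply: (filterS _ H0) => y; rewrite evalEth.
by near=> y; split; [|split]; near: y.
Unshelve. all: by end_near.
Qed.


Lemma open_V : open Vset.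
Proof.
rewrite openE => x Vx; rewrite /interior.
have Vx' := Vx; case: Vx' => h0 h1 ha hs hp.
have n0 := near_var h0; have n1 := near_var h1.
have na : \forall y \near x, forall j, (j < n - 2)%N -> 0 < coord y j.+2 < pi.
  apply: near_forall_lt => j hj; have /andP[a1 a2] := ha j hj.
  have m1 := near_var a1; have m2 := @near_lt (EVar j.+2) x pi ltac:(by []) a2.
  by near=> y; apply/andP; split; near: y.
have ns : \forall y \near x, \sum_(j < n - 2) coord y j.+2 < 2 * pi.
  have := @near_lt (Eth' (n - 2)) x (2 * pi) ltac:(by elim: (n - 2)%N => //=).
  rewrite evalEth' => /(_ hs).
  by move=> H0; apply: (filterS _ H0) => y; rewrite evalEth'.
have np : \forall y \near x, forall k, (k < n - 1)%N -> (2 <= k)%N -> 0 < eval (PT k) y.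
  apply: near_forall_lt => k hk.
  case: (leqP 2 k) => k2; last by near=> y => h; exfalso; lia.
  have := @near_pos (PT k) x (wfPT k Vx) (V_PT Vx (k := k) ltac:(lia)).
  by move=> H0; apply: (filterS _ H0) => y h _.
near=> y; split.
- by near: y.
- by near: y.
- by near: y.
- by near: y.
- move=> k /andP[k2 kn].
  have : forall k, (k < n - 1)%N -> (2 <= k)%N -> 0 < eval (PT k) y by near: y.
  by apply; lia.
Unshelve. all: by end_near.
Qed.

Lemma chart_Gamma x : Omega R n x ->
  (Gamma R n x <-> forall i : 'I_N, (n <= i)%N -> phi x ord0 i = 0).
Proof.
move=> Om; rewrite /Gamma /=.
have -> : (Omega R n x /\ inscribable x) <-> inscribable x by split; [case|split].
rewrite (K1 hn Om); split.
  move=> h i hi; rewrite -coord_ord.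
  have [j ej] : exists j, nat_of_ord i = (n + j)%N by exists (i - n)%N; lia.
  rewrite ej phi_cD; last by have := ltn_ord i; lia.
  by rewrite -h ?subrr //; have := ltn_ord i; lia.
move=> h k /andP[k2 kn].
have hi : (n + (k - 2) < N)%N by lia.
have := h (Ordinal hi) ltac:(by rewrite /=; lia).
rewrite -coord_ord /= phi_cD; last by lia.
rewrite (_ : (k - 2).+2 = k)%N; last by lia.
by move/eqP; rewrite subr_eq0 => /eqP.
Qed.

End Chart.

Unset Implicit Arguments.

Theorem proposition2p3 (R : realType) (n : nat) (hn : (4 <= n)%N) :
  Gamma R n = Omega R n `&` [set w | gamma w = 0] /\
  submanifold n (Gamma R n).
Proof.
split; first exact: part1.
move=> p Gp.
exists (Omega R n), (@Vset R n), (@phi R n), (@psi R n).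
split; first split.
- exact: open_Omega.
- by case: Gp.
- exact: open_V.
- apply: smooth_rowf; first exact: open_Omega.
  by move=> x Om j hj; apply: wfPhi.
- apply: smooth_rowf; first exact: open_V.
  by move=> y Vy j hj; apply: wfPsi.
split.
- by move=> x Om; split; [apply: phi_V | apply: psi_phi].
- by move=> y Vy; split; [apply: psi_U | apply: phi_psi].
- by move=> x Om; apply: chart_Gamma.
Qed.
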